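(* Let $n\ge 2$ be an integer. For $\alpha,\beta\in\{0,1,\ldots,2^n-1\}$ define $f_{\alpha,\beta}:\{0,\ldots,2^n-1\}\to\{0,\ldots,2^n-1\}$ by $f_{\alpha,\beta}(x)=\big((\alpha+x)\bmod 2^n\big)\oplus\big((\beta+x)\bmod 2^n\big)$. Call a finite set $Q$ of pairs $(\alpha,\beta)$ a determining set if for all $x,x'\in\{0,\ldots,2^n-1\}$, the condition $f_{\alpha,\beta}(x)=f_{\alpha,\beta}(x')$ for every $(\alpha,\beta)\in Q$ implies $x\equiv x'\pmod{2^{n-1}}$. Then the minimum cardinality of a determining set is $1$ if $n=2$, and $2$ if $n>2$.
   Context: $\oplus$ denotes bitwise exclusive OR (XOR) of the binary representations of non-negative integers. A determining set is one whose query values $f_{\alpha,\beta}(x)$ recover $x$ modulo $2^{n-1}$ uniquely (the most significant bit of $x$ cannot be recovered in general, since $((\alpha+(x\oplus 2^{n-1}))\bmod 2^n)=((\alpha+x)\bmod 2^n)\oplus 2^{n-1}$). *)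

(* Defs.v *)
From mathcomp Require Import all_boot.
From Stdlib Require Import PeanoNat.
Set Implicit Arguments. Unset Strict Implicit. Unset Printing Implicit Defensive.

Definition fab (n a b x : nat) : nat :=
  Nat.lxor ((a + x) %% 2 ^ n) ((b + x) %% 2 ^ n).

Definition query (n : nat) := ('I_(2 ^ n) * 'I_(2 ^ n))%type.

Definition determining (n : nat) (Q : {set query n}) : Prop :=
  forall x x' : 'I_(2 ^ n),
    (forall q, q \in Q -> fab n q.1 q.2 x = fab n q.1 q.2 x') ->
    x = x' %[mod 2 ^ (n - 1)].

(* Main.v *)
Require Import Defs.
From mathcomp Require Import all_boot.
From mathcomp Require Import zify.
From Stdlib Require Import Lia.

Lemma powE a n : PeanoNat.Nat.pow a n = a ^ n.
Proof. elim: n => [|n IH] //=. by rewrite expnS IH mulnE. Qed.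

Lemma divE a b : 0 < b -> PeanoNat.Nat.div a b = a %/ b.
Proof.
move=> hb. symmetry. apply: (PeanoNat.Nat.div_unique _ _ _ (a %% b)).
- apply/ltP. by rewrite ltn_mod.
- rewrite {1}(divn_eq a b) -mulnE -plusE. lia.
Qed.

Lemma modE a b : 0 < b -> PeanoNat.Nat.modulo a b = a %% b.
Proof.
move=> hb. have := PeanoNat.Nat.div_mod_eq a b.
rewrite divE // {1}(divn_eq a b) -mulnE -plusE. lia.
Qed.

Lemma testbitE a j : PeanoNat.Nat.testbit a j = odd (a %/ 2 ^ j).
Proof.
have := PeanoNat.Nat.testbit_spec' a j.
rewrite powE divE ?expn_gt0 // modE // modn2.
by case: (PeanoNat.Nat.testbit a j); case: odd.
Qed.

Definition carry d x j := 2 ^ j <= x %% 2 ^ j + d %% 2 ^ j.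

Lemma fab_bit n d x j : x < 2 ^ n -> j < n ->
  PeanoNat.Nat.testbit (fab n 0 d x) j = xorb (odd (d %/ 2^j)) (carry d x j).
Proof.
move=> hx hj. rewrite /fab powE add0n (modn_small hx) PeanoNat.Nat.lxor_spec !testbitE.
have hK : 0 < 2 ^ j by rewrite expn_gt0.
have eN : 2 ^ n = 2 ^ (n - j) * 2 ^ j by rewrite -expnD subnK // ltnW.
have h1 : odd ((d + x) %/ 2 ^ j) = odd ((d + x) %% 2 ^ n %/ 2 ^ j).
  rewrite {1}(divn_eq (d + x) (2 ^ n)) {2}eN mulnA divnMDl // oddD oddM.
  have -> : odd (2 ^ (n - j)) = false.
    have : 0 < n - j by rewrite subn_gt0.
    by case: (n - j) => [|k] // _; rewrite expnS mul2n odd_double.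
  by rewrite andbF.
rewrite -h1 divnD // /carry [x %% _ + _]addnC.
rewrite !oddD.
move: (odd (d %/ 2 ^ j)) (odd (x %/ 2 ^ j)) (2 ^ j <= d %% 2 ^ j + x %% 2 ^ j) => a b c.
by case: a; case: b; case: c.
Qed.

Lemma fab_carry n d x x' j : x < 2 ^ n -> x' < 2 ^ n -> j < n ->
  fab n 0 d x = fab n 0 d x' -> carry d x j = carry d x' j.
Proof.
move=> hx hx' hj e.
have := fab_bit n d x j hx hj; have := fab_bit n d x' j hx' hj; rewrite e => ->.
by case: (odd _); case: carry; case: carry.
Qed.

Lemma core K u u' D : 0 < K -> u < K -> u' = u + K ->
  (3 * D = 2 * K + 1 \/ 3 * D = 4 * K + 1) ->
  (2 * K <= u + D) = (2 * K <= u' + D) ->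
  (K = 1 \/ (2 * K <= u + (2 * K - D)) = (2 * K <= u' + (2 * K - D))) -> False.
Proof.
move=> hK hu -> hD.
case: (leqP (2 * K) (u + D)); case: (leqP (2 * K) (u + K + D)) => // h1 h2 _;
 (case=> [hK1|]; [lia|]);
 case: (leqP (2 * K) (u + (2 * K - D))); case: (leqP (2 * K) (u + K + (2 * K - D))) => // h3 h4 _; lia.
Qed.

Lemma three_inv M K d : 1 < K -> K %| M -> (3 * d = M + 1 \/ 3 * d = 2 * M + 1) ->
  3 * (d %% K) = K + 1 \/ 3 * (d %% K) = 2 * K + 1.
Proof.
move=> hK hKM hd.
have hm : (3 * (d %% K)) %% K = 1.
  rewrite modnMmr. have eM : M = (M %/ K) * K by rewrite divnK.
  case: hd => ->; rewrite eM; [rewrite modnMDl | rewrite mulnA modnMDl]; by rewrite modn_small.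
have hlt : 3 * (d %% K) < 3 * K by rewrite ltn_pmul2l // ltn_mod; lia.
have := divn_eq (3 * (d %% K)) K; rewrite hm.
have : 3 * (d %% K) %/ K < 3 by rewrite ltn_divLR; lia.
case: (3 * (d %% K) %/ K) => [|[|[|q]]] //= _; lia.
Qed.

Lemma emod N K d : 0 < K -> K %| N -> d < N -> 0 < d %% K ->
  (N - d) %% K = K - d %% K.
Proof.
move=> hK hKN hd hD.
have hs : ((N - d) %% K + d %% K) %% K = 0.
  by rewrite modnDm subnK ?(ltnW hd) //; apply/eqP.
have h1 : (N - d) %% K < K by rewrite ltn_mod.
have h2 : d %% K < K by rewrite ltn_mod.
have : K %| (N - d) %% K + d %% K by apply/eqP.
case/dvdnP => k hk.
move: hk; case: k => [|[|k]] /=; lia.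
Qed.

Lemma step K u u' D E : 0 < K -> u < 2 * K -> u' < 2 * K -> u %% K = u' %% K ->
  (3 * D = 2 * K + 1 \/ 3 * D = 4 * K + 1) -> E = 2 * K - D ->
  (2 * K <= u + D) = (2 * K <= u' + D) ->
  (K = 1 \/ (2 * K <= u + E) = (2 * K <= u' + E)) -> u = u'.
Proof.
move=> hK hu hu' huK h3D -> c1 c2.
have eu := divn_eq u K; have eu' := divn_eq u' K.
have qu : u %/ K < 2 by rewrite ltn_divLR.
have qu' : u' %/ K < 2 by rewrite ltn_divLR.
have hr : u' %% K < K by rewrite ltn_mod.
have c1' := esym c1.
have c2' : K = 1 \/ (2 * K <= u' + (2 * K - D)) = (2 * K <= u + (2 * K - D)).
  by case: c2 => [e|e]; [left|right].
move: eu eu' qu qu'; rewrite huK.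
case: (u %/ K) => [|[|q]]; case: (u' %/ K) => [|[|q']] eu eu' qu qu'; try lia.
all: exfalso; first [apply: (@core K u u' D hK _ _ h3D c1 c2); lia
                    | apply: (@core K u' u D hK _ _ h3D c1' c2'); lia].
Qed.

Lemma main_det n d x x' : 2 <= n -> 0 < d < 2 ^ (n - 1) ->
  (3 * d = 2 ^ (n - 1) + 1 \/ 3 * d = 2 * 2 ^ (n - 1) + 1) ->
  x < 2 ^ n -> x' < 2 ^ n ->
  (forall j, j < n -> carry d x j = carry d x' j) ->
  (forall j, 1 < j < n -> carry (2 ^ n - d) x j = carry (2 ^ n - d) x' j) ->
  x %% 2 ^ (n - 1) = x' %% 2 ^ (n - 1).
Proof.
move=> hn /andP[hd0 hd1] h3 hx hx' cd ce.
have hMN : 2 ^ (n - 1) < 2 ^ n by rewrite ltn_exp2l // subn1 ltn_predL; apply: ltnW.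
have hdN : d < 2 ^ n by apply: ltn_trans hMN.
suff : forall i, i <= n - 1 -> x %% 2 ^ i = x' %% 2 ^ i by apply.
elim=> [|i IH] hi; first by rewrite !modn1.
have {}IH := IH (ltnW hi).
have hin : i.+1 < n by move: hi hn; clear; lia.
have hK : 0 < 2 ^ i by rewrite expn_gt0.
have eK2 : 2 ^ i.+1 = 2 * 2 ^ i by rewrite expnS.
have hKK2 : 2 ^ i %| 2 ^ i.+1 by rewrite dvdn_exp2l.
have hK2M : 2 ^ i.+1 %| 2 ^ (n - 1) by rewrite dvdn_exp2l.
have hK2N : 2 ^ i.+1 %| 2 ^ n by rewrite dvdn_exp2l // ltnW.
have H : 3 * (d %% 2 ^ i.+1) = 2 ^ i.+1 + 1 \/ 3 * (d %% 2 ^ i.+1) = 2 * 2 ^ i.+1 + 1.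
  apply: (@three_inv (2 ^ (n - 1))) => //.
  by rewrite -{1}(expn0 2) ltn_exp2l.
have hD : 0 < d %% 2 ^ i.+1 by move: H; clear; lia.
have hE := @emod (2 ^ n) (2 ^ i.+1) d (expn_gt0 2 i.+1) hK2N hdN hD.
apply: (@step (2 ^ i) _ _ (d %% 2 ^ i.+1) ((2 ^ n - d) %% 2 ^ i.+1) hK).
- by rewrite -eK2 ltn_mod expn_gt0.
- by rewrite -eK2 ltn_mod expn_gt0.
- by rewrite !modn_dvdm.
- by move: H; rewrite eK2; clear; lia.
- by rewrite hE eK2.
- by have := cd i.+1 hin; rewrite /carry eK2.
- case: (posnP i) => [i0|ipos]; [left; by rewrite i0|right].
  have := ce i.+1 ltac:(move: ipos hin; clear; lia); by rewrite /carry eK2.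
Qed.

Lemma sum_mod u v N : (u %% N + v %% N + 1) %% N = (u + v + 1) %% N.
Proof. by rewrite -addnA modnDml addnCA modnDml addnCA addnA. Qed.

Lemma compl r1 r2 N : r1 < N -> r2 < N -> (r1 + r2 + 1) %% N = 0 -> r1 = N - 1 - r2.
Proof.
move=> h1 h2 h.
have : N %| r1 + r2 + 1 by apply/eqP.
case/dvdnP => k hk.
move: hk; case: k => [|[|k]] /=; lia.
Qed.

Lemma lxor_compl n p q : 0 < n -> p < 2 ^ n -> q < 2 ^ n ->
  PeanoNat.Nat.lxor (2 ^ n - 1 - p) (2 ^ n - 1 - q) = PeanoNat.Nat.lxor p q.
Proof.
move=> hn hp hq.
have L : forall r, r < 2 ^ n -> 2 ^ n - 1 - r = PeanoNat.Nat.lnot r n.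
  move=> r hr. rewrite PeanoNat.Nat.lnot_sub_low; last first.
    case: (posnP r) => [->|rpos]; first by apply/ltP.
    apply (proj1 (PeanoNat.Nat.log2_lt_pow2 r n (elimT ltP rpos))).
    by rewrite powE; apply/ltP.
  by rewrite PeanoNat.Nat.ones_equiv powE subn1 -minusE.
by rewrite !L // PeanoNat.Nat.lxor_lnot_lnot.
Qed.

Lemma collide n a b X : 0 < n -> a < 2 ^ n -> b < 2 ^ n -> X < 2 ^ n ->
  fab n a b X = fab n a b ((3 * 2 ^ n - 1 - a - b - X) %% 2 ^ n).
Proof.
move=> hn ha hb hX. rewrite /fab powE.
set N := 2 ^ n. set W := 3 * N - 1 - a - b - X.
have hN : 0 < N by rewrite expn_gt0.
have hW : a + W + (b + X) + 1 = 3 * N by rewrite /W; lia.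
have hW' : b + W + (a + X) + 1 = 3 * N by rewrite /W; lia.
rewrite !modnDmr.
rewrite (@compl ((a + W) %% N) ((b + X) %% N) N) ?ltn_mod //; last first.
  by rewrite sum_mod hW modnMl.
rewrite (@compl ((b + W) %% N) ((a + X) %% N) N) ?ltn_mod //; last first.
  by rewrite sum_mod hW' modnMl.
by rewrite lxor_compl ?ltn_mod // PeanoNat.Nat.lxor_comm.
Qed.

Lemma noncong n a b : 3 <= n -> a < 2 ^ n -> b < 2 ^ n ->
  exists X, X < 2 /\ X %% 2 ^ (n - 1) != ((3 * 2 ^ n - 1 - a - b - X) %% 2 ^ n) %% 2 ^ (n - 1).
Proof.
move=> hn ha hb.
set M := 2 ^ (n - 1).
have eN : 2 ^ n = 2 * M by rewrite /M -expnS subn1 prednK // ltnW // ltnW.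
have hM4 : 4 <= M.
  have h : 2 <= n - 1 by move: hn; clear; lia.
  by rewrite /M (_ : 4 = 2 ^ 2) // leq_exp2l.
have key : forall X, X < 2 -> X %% M = ((3 * 2 ^ n - 1 - a - b - X) %% 2 ^ n) %% M ->
    M %| 2 * X + 1 + a + b.
  move=> X hX e.
  rewrite modn_dvdm in e; last by rewrite eN dvdn_mull.
  move: e; set W := 3 * 2 ^ n - 1 - a - b - X => e.
  have hW : 2 * X + 1 + a + b + W = 6 * M + X.
    rewrite /W eN. move: ha hb hX hM4; rewrite eN; clear; lia.
  have : (2 * X + 1 + a + b + W == 0 + W %[mod M]) by rewrite hW modnMDl add0n e.
  by rewrite eqn_modDr mod0n.
case: (boolP (0 %% M != ((3 * 2 ^ n - 1 - a - b - 0) %% 2 ^ n) %% M)) => h0.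
  by exists 0.
case: (boolP (1 %% M != ((3 * 2 ^ n - 1 - a - b - 1) %% 2 ^ n) %% M)) => h1.
  by exists 1.
have d0 := key 0 isT (eqP (negbNE h0)).
have d1 := key 1 isT (eqP (negbNE h1)).
have e2 : 2 * 1 + 1 + a + b = 2 + (2 * 0 + 1 + a + b) by clear; lia.
rewrite e2 (dvdn_addl _ d0) in d1.
have := dvdn_leq (isT : 0 < 2) d1.
by move: hM4; clearbody M; clear; lia.
Qed.

Lemma exists_d n : 2 <= n -> exists d, 0 < d < 2 ^ (n - 1) /\
  (3 * d = 2 ^ (n - 1) + 1 \/ 3 * d = 2 * 2 ^ (n - 1) + 1).
Proof.
move=> hn.
have hM2 : 2 <= 2 ^ (n - 1).
  have h : 1 <= n - 1 by move: hn; clear; lia.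
  by rewrite (_ : 2 = 2 ^ 1) // leq_exp2l.
have nd : ~~ (3 %| 2 ^ (n - 1)) by rewrite Euclid_dvdX.
have e := divn_eq (2 ^ (n - 1)) 3.
have hr : 2 ^ (n - 1) %% 3 < 3 by rewrite ltn_mod.
move: nd e hr hM2; rewrite /dvdn.
move: (2 ^ (n - 1)) => M; move: (M %/ 3) (M %% 3) => q [|[|[|r]]] //= _ e _ hM.
- exists (2 * q + 1); lia.
- exists (q + 1); lia.
Qed.

Theorem proposition1 (n : nat) (hn : 2 <= n) :
  let m := if n == 2 then 1 else 2 in
  (exists Q : {set query n}, determining Q /\ #|Q| = m) /\
  (forall Q : {set query n}, determining Q -> m <= #|Q|).
Proof.
move=> m.
have hN0 : 0 < PeanoNat.Nat.pow 2 n by rewrite powE expn_gt0.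
have hN2 : 2 <= PeanoNat.Nat.pow 2 n.
  by rewrite powE (_ : 2 = 2 ^ 1) // leq_exp2l // ltnW.
pose o0 : 'I_(PeanoNat.Nat.pow 2 n) := Ordinal hN0.
split.
- have [d [/andP [hd0 hd1] h3]] := exists_d n hn.
  have hMN : 2 ^ (n - 1) < 2 ^ n by rewrite ltn_exp2l // subn1 ltn_predL; apply: ltnW.
  have hdN : d < PeanoNat.Nat.pow 2 n by rewrite powE; apply: ltn_trans hMN.
  have heN : 2 ^ n - d < PeanoNat.Nat.pow 2 n by rewrite powE; move: hd0 hMN; clear; lia.
  pose od : 'I_(PeanoNat.Nat.pow 2 n) := Ordinal hdN.
  pose oe : 'I_(PeanoNat.Nat.pow 2 n) := Ordinal heN.
  have det : forall Q : {set query n}, (o0, od) \in Q ->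
      (2 < n -> (o0, oe) \in Q) -> determining Q.
    move=> Q h1 h2 x x' hq.
    rewrite (powE 2 (n - 1)).
    have hx : x < 2 ^ n by rewrite -powE.
    have hx' : x' < 2 ^ n by rewrite -powE.
    apply: (@main_det n d x x' hn _ h3 hx hx').
    + by rewrite hd0 hd1.
    + move=> j hj; exact: (fab_carry n d x x' j hx hx' hj (hq _ h1)).
    + move=> j /andP [hj1 hj2].
      exact: (fab_carry n (2 ^ n - d) x x' j hx hx' hj2 (hq _ (h2 (leq_ltn_trans hj1 hj2)))).
  rewrite /m; case: eqP => [n2|n2].
  + exists [set (o0, od)]; split; last by rewrite cards1.
    apply: det; first by rewrite set11.
    by move=> h; exfalso; move: h; rewrite n2.
  + exists [set (o0, od); (o0, oe)]; split.
      apply: det; first by rewrite !inE eqxx.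
      by rewrite !inE eqxx orbT.
    rewrite cards2.
    have -> : (o0, od) != (o0, oe).
      apply/eqP => e; have := congr1 (fun p : query n => nat_of_ord p.2) e => /=.
      have eN : 2 ^ n = 2 * 2 ^ (n - 1) by rewrite -expnS subn1 prednK // ltnW.
      move: hd1 eN; clear; lia.
    by [].
- move=> Q hQ.
  have h1 : 1 < 2 ^ (n - 1).
    have h : 1 <= n - 1 by move: hn; clear; lia.
    by rewrite (_ : 1 = 2 ^ 0) // ltn_exp2l.
  have hpos : 0 < #|Q|.
    rewrite lt0n; apply/negP => /eqP /cards0_eq Q0.
    have := hQ o0 (Ordinal hN2); rewrite Q0 (powE 2 (n - 1)) /= mod0n modn_small // => H.
    have : 0 = 1 by apply: H => q; rewrite inE.
    by [].
  rewrite /m; case: eqP => // n2.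
  have hn3 : 3 <= n by move: hn n2; clear; lia.
  rewrite ltnNge; apply/negP => hQ1.
  have [q0 hq0] : exists q0, forall q, q \in Q -> q = q0.
    have : #|Q| == 1 by rewrite eqn_leq hQ1 hpos.
    case/cards1P => q0 ->. by exists q0 => q; rewrite inE => /eqP.
  have ha : q0.1 < 2 ^ n by rewrite -powE.
  have hb : q0.2 < 2 ^ n by rewrite -powE.
  have [X [hX hne]] := noncong n q0.1 q0.2 hn3 ha hb.
  have hXN : X < PeanoNat.Nat.pow 2 n by apply: leq_trans hN2.
  have hX'N : (3 * 2 ^ n - 1 - q0.1 - q0.2 - X) %% 2 ^ n < PeanoNat.Nat.pow 2 n.
    by rewrite [X in _ < X]powE ltn_mod expn_gt0.
  have := hQ (Ordinal hXN) (Ordinal hX'N); rewrite (powE 2 (n - 1)) /= => H.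
  move/negP: hne; apply; apply/eqP; apply: H => q /hq0 ->.
  have hXN' : X < 2 ^ n by rewrite -powE.
  apply: collide => //; move: hn; clear; lia.
Qed.
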